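(* Let $r\in\mathbb{Q}^\times$ and $f_r(t)=-r\sum_{k\ge1}(-1)^k\binom{1/r}{k}t^k$. (i) Let $p$ be a prime with $v_p(r)=0$, let $\phi_{r,p}\in C(\mathbb{Z}_p,\mathbb{C}_p)$ be the unique function with $\sum_{n\ge0}\phi_{r,p}(n)t^n/n!=\exp(f_r(t))$, and let $\Phi_{r,p}(s)=S^s(\phi_{r,p})(-1)$ for $s\in\mathbb{Z}_p$. Then $\Phi_{r,p}(s+\tfrac1r-1)=1+s\,\Phi_{r,p}(s-1)$ for all $s\in\mathbb{Z}_p$. (ii) Let $\Phi_{r,\infty}(\sigma)=\int_{-\infty}^0(1-x)^\sigma\exp\big(-r((1-x)^{1/r}-1)\big)dx$. Then $\Phi_{r,\infty}(s+\tfrac1r-1)=1+s\,\Phi_{r,\infty}(s-1)$ for all $s\in\mathbb{C}$ if $r>0$, and for all $s\in\mathbb{C}$ with $\mathrm{Re}\,s<0$ if $r<0$.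
   Context: $\mathbb{C}_p$ is the completion of an algebraic closure of $\mathbb{Q}_p$; $C(\mathbb{Z}_p,\mathbb{C}_p)$ the continuous functions $\mathbb{Z}_p\to\mathbb{C}_p$. For $x\in\mathbb{Z}_p$ (or any field element) $\binom xk=x(x-1)\cdots(x-k+1)/k!$. For $y\in\mathbb{Z}_p$ and $\phi\in C(\mathbb{Z}_p,\mathbb{C}_p)$, $S^y(\phi)(x)=\sum_{k\ge0}(-1)^kk!\binom yk\binom xk\phi(x-k)$. Since $v_p(r)=0$, $1/r\in\mathbb{Z}_p$ and $f_r\in\mathbb{Z}_p[[t]]$ with $f_r(0)=0$, $f_r'(0)=1$, so $\phi_{r,p}$ exists and is unique. For $x\le0$, $(1-x)^\sigma=\exp(\sigma\log(1-x))$ with the real logarithm; $\Phi_{r,\infty}(\sigma)$ converges for all $\sigma$ if $r>0$ and for $\mathrm{Re}\,\sigma<-1$ if $r<0$. *)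

(* Defs.v *)
From Stdlib Require Import Reals QArith Qreals ZArith Znumtheory.
From Coquelicot Require Import Coquelicot.

Definition zfact (k : nat) : Z := Z.of_nat (fact k).

Fixpoint zfalling (a : Z) (k : nat) : Z :=
  match k with
  | O => 1%Z
  | S k' => (zfalling a k' * (a - Z.of_nat k'))%Z
  end.

(* binomial coefficient binom(a,k) of an integer a (exact division) *)
Definition zbinom (a : Z) (k : nat) : Z := (zfalling a k / zfact k)%Z.

(* An element is represented by a sequence x : nat -> Z of integers   *)
(* with x (n+1) = x n mod p^n (isZp); x n is "x mod p^n".  Two        *)
(* representatives denote the same p-adic integer iff zp_eq.          *)

Definition padic := nat -> Z.

Definition isZp (p : Z) (x : padic) : Prop :=
  forall n : nat, (p ^ Z.of_nat n | x (S n) - x n)%Z.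

Definition zp_eqm (p : Z) (n : nat) (x y : padic) : Prop :=
  (p ^ Z.of_nat n | x n - y n)%Z.

Definition zp_eq (p : Z) (x y : padic) : Prop :=
  forall n : nat, zp_eqm p n x y.

Definition zp_const (c : Z) : padic := fun _ => c.
Definition zp_add (x y : padic) : padic := fun n => (x n + y n)%Z.
Definition zp_mul (x y : padic) : padic := fun n => (x n * y n)%Z.
Definition zp_opp (x : padic) : padic := fun n => (- x n)%Z.
Definition zp_sub (x y : padic) : padic := fun n => (x n - y n)%Z.

(* binom(y,k) for y in Z_p: the continuous extension of the integer
   binomial; mod p^n it is binom(y mod p^(n+k), k) (v_p(k!) < k). *)
Definition zp_binom (y : padic) (k : nat) : padic :=
  fun n => zbinom (y (n + k)%nat) k.

(* the rational q (assumed p-integral) viewed in Z_p: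
   x is q in Z_p iff den(q) * x = num(q) in Z_p *)
Definition zp_of_rat (p : Z) (x : padic) (q : Q) : Prop :=
  zp_eq p (zp_mul (zp_const (Zpos (Qden q))) x) (zp_const (Qnum q)).

(* continuous maps Z_p -> Z_p (on representatives; continuity forces
   compatibility with zp_eq) *)
Definition zp_continuous (p : Z) (phi : padic -> padic) : Prop :=
  forall x : padic, isZp p x ->
    isZp p (phi x) /\
    forall n : nat, exists m : nat, forall y : padic,
      isZp p y -> zp_eqm p m x y -> zp_eqm p n (phi x) (phi y).

Fixpoint zp_sum (t : nat -> padic) (N : nat) : padic :=
  match N with
  | O => zp_const 0
  | S N' => zp_add (zp_sum t N') (t N')
  end.

Definition zp_series_to (p : Z) (t : nat -> padic) (L : padic) : Prop :=
  isZp p L /\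
  forall n : nat, exists K : nat, forall N : nat,
    (K <= N)%nat -> zp_eqm p n (zp_sum t N) L.

(* k-th term of S^y(phi)(x) = sum_k (-1)^k k! binom(y,k) binom(x,k) phi(x-k) *)
Definition S_term (phi : padic -> padic) (y x : padic) (k : nat) : padic :=
  zp_mul (zp_const ((-1) ^ Z.of_nat k * zfact k)%Z)
    (zp_mul (zp_binom y k)
       (zp_mul (zp_binom x k) (phi (zp_sub x (zp_const (Z.of_nat k)))))).

Definition S_op_to (p : Z) (phi : padic -> padic) (y x L : padic) : Prop :=
  zp_series_to p (S_term phi y x) L.

Fixpoint qsum (f : nat -> Q) (N : nat) : Q :=
  match N with
  | O => 0%Q
  | S N' => (qsum f N' + f N')%Q
  end.

Definition qfact (k : nat) : Q := inject_Z (zfact k).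

Fixpoint qfalling (x : Q) (k : nat) : Q :=
  match k with
  | O => 1%Q
  | S k' => (qfalling x k' * (x - inject_Z (Z.of_nat k')))%Q
  end.

Definition qbinom (x : Q) (k : nat) : Q := (qfalling x k / qfact k)%Q.

Definition qsignpow (k : nat) : Q := inject_Z ((-1) ^ Z.of_nat k)%Z.

Definition fr_coef (r : Q) (k : nat) : Q :=
  match k with
  | O => 0%Q
  | S _ => (- r * qsignpow k * qbinom (/ r) k)%Q
  end.

Definition ps_mul (a b : nat -> Q) : nat -> Q :=
  fun n => qsum (fun i => a i * b (n - i)%nat)%Q (S n).

Fixpoint ps_pow (a : nat -> Q) (k : nat) : nat -> Q :=
  match k with
  | O => fun n => match n with O => 1%Q | S _ => 0%Q end
  | S k' => ps_mul (ps_pow a k') a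
  end.

(* n-th coefficient of exp(f) = sum_k f^k / k!  for f with f(0) = 0
   (only k <= n contribute to the coefficient of t^n) *)
Definition ps_exp_coef (f : nat -> Q) (n : nat) : Q :=
  qsum (fun k => ps_pow f k n / qfact k)%Q (S n).

Definition phi_coef (r : Q) (n : nat) : Q :=
  (qfact n * ps_exp_coef (fr_coef r) n)%Q.

Definition Cexp (z : C) : C :=
  (exp (Re z) * cos (Im z), exp (Re z) * sin (Im z))%R.

(* integrand of Phi_{r,infty}(sigma):
   (1-x)^sigma * exp(-r((1-x)^(1/r) - 1)),  (1-x)^sigma = exp(sigma log(1-x)) *)
Definition Phi_inf_integrand (r : R) (sigma : C) (x : R) : C :=
  Cmult (Cexp (Cmult sigma (RtoC (ln (1 - x)))))
        (RtoC (exp (- r * (Rpower (1 - x) (/ r) - 1)))).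

Definition Phi_inf_is (r : R) (sigma : C) (l : C) : Prop :=
  is_RInt_gen (Phi_inf_integrand r sigma) (Rbar_locally m_infty) (at_point 0) l.

(* Main.v *)
Require Import Defs.
From Stdlib Require Import Reals QArith Qreals ZArith Znumtheory Lia Lra Arith Factorial.
From Coquelicot Require Import Coquelicot.

Local Open Scope Z_scope.

Fixpoint zs (f : nat -> Z) (n : nat) : Z :=
  match n with O => 0 | S n' => zs f n' + f n' end.

Lemma zs_ext f g n : (forall i, (i < n)%nat -> f i = g i) -> zs f n = zs g n.
Proof. induction n; simpl; intros H; auto. rewrite IHn by (intros; apply H; lia). rewrite H by lia. auto. Qed.

Lemma zs_plus f g n : zs (fun i => f i + g i) n = zs f n + zs g n.
Proof. induction n; simpl; auto. rewrite IHn; ring. Qed.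

Lemma zs_scal c f n : zs (fun i => c * f i) n = c * zs f n.
Proof. induction n; simpl; [ring| rewrite IHn; ring]. Qed.

Lemma zs_shift f n : zs f (S n) = f 0%nat + zs (fun i => f (S i)) n.
Proof. induction n. simpl; ring. change (zs f (S (S n))) with (zs f (S n) + f (S n)). rewrite IHn. simpl; ring. Qed.

Lemma zs_tail f m n : (m <= n)%nat -> (forall i, (m <= i < n)%nat -> f i = 0) -> zs f n = zs f m.
Proof. induction n; intros Hmn H. assert (m = 0)%nat by lia. subst; auto.
  destruct (Nat.eq_dec m (S n)). subst; auto. simpl. rewrite IHn by (try lia; intros; apply H; lia).
  rewrite H by lia. ring. Qed.

Lemma zs_div q f n : (forall i, (i < n)%nat -> (q | f i)) -> (q | zs f n).
Proof. induction n; simpl; intros H. apply Z.divide_0_r. apply Z.divide_add_r; auto. Qed.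

Lemma zs_cong q f g n : (forall i, (i < n)%nat -> (q | f i - g i)) -> (q | zs f n - zs g n).
Proof. intros H. replace (zs f n - zs g n) with (zs (fun i => f i - g i) n).
  apply zs_div; auto. induction n; simpl; auto. rewrite IHn; auto. ring. Qed.

Lemma cg_refl q a : (q | a - a). Proof. replace (a-a) with 0 by ring. apply Z.divide_0_r. Qed.
Lemma cg_sym q a b : (q | a - b) -> (q | b - a).
Proof. intros H. replace (b-a) with (-(a-b)) by ring. now apply Z.divide_opp_r. Qed.
Lemma cg_trans q a b c : (q | a - b) -> (q | b - c) -> (q | a - c).
Proof. intros. replace (a-c) with ((a-b)+(b-c)) by ring. now apply Z.divide_add_r. Qed.
Lemma cg_add q a b c d : (q | a - b) -> (q | c - d) -> (q | (a + c) - (b + d)).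
Proof. intros. replace ((a+c)-(b+d)) with ((a-b)+(c-d)) by ring. now apply Z.divide_add_r. Qed.
Lemma cg_sub q a b c d : (q | a - b) -> (q | c - d) -> (q | (a - c) - (b - d)).
Proof. intros. replace ((a-c)-(b-d)) with ((a-b)-(c-d)) by ring. now apply Z.divide_sub_r. Qed.
Lemma cg_mul q a b c d : (q | a - b) -> (q | c - d) -> (q | (a * c) - (b * d)).
Proof. intros. replace ((a*c)-(b*d)) with ((a-b)*c+b*(c-d)) by ring.
  apply Z.divide_add_r; [apply Z.divide_mul_l|apply Z.divide_mul_r]; auto. Qed.
Lemma cg_weak q q' a b : (q' | q) -> (q | a - b) -> (q' | a - b).
Proof. intros; eapply Z.divide_trans; eauto. Qed.
Lemma cg_zero q a b : (q | a) -> (q | b) -> (q | a - b).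
Proof. intros; now apply Z.divide_sub_r. Qed.

Lemma fall_S a k : zfalling a (S k) = zfalling a k * (a - Z.of_nat k).
Proof. reflexivity. Qed.

Lemma fall_left a k : zfalling a (S k) = a * zfalling (a-1) k.
Proof. revert a; induction k; intros a. cbn [zfalling Z.of_nat]. ring.
  rewrite fall_S, IHk, fall_S. rewrite Nat2Z.inj_succ. ring. Qed.

Lemma fall_pascal a k : zfalling (a+1) (S k) = zfalling a (S k) + (Z.of_nat k + 1) * zfalling a k.
Proof. rewrite fall_left. replace (a+1-1) with a by ring. rewrite fall_S. ring. Qed.

Lemma zfact_S k : zfact (S k) = (Z.of_nat k + 1) * zfact k.
Proof. unfold zfact. simpl fact. rewrite Nat2Z.inj_add, Nat2Z.inj_mul. ring. Qed.

Lemma zfact_pos k : 0 < zfact k.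
Proof. unfold zfact. pose proof (lt_O_fact k). lia. Qed.

Lemma fall_div k : forall a, (zfact k | zfalling a k).
Proof. induction k; intros a. simpl. apply Z.divide_refl.
  induction a using Z.peano_ind.
  - rewrite fall_left. replace (zfalling (0-1) k) with (zfalling (0-1) k) by auto. rewrite Z.mul_0_l. apply Z.divide_0_r.
  - rewrite <- Z.add_1_r, fall_pascal. apply Z.divide_add_r; auto.
    rewrite zfact_S. apply Z.mul_divide_mono_l. auto.
  - assert (E := fall_pascal (Z.pred a) k). replace (Z.pred a + 1) with a in E by lia.
    replace (zfalling (Z.pred a) (S k)) with (zfalling a (S k) - (Z.of_nat k + 1) * zfalling (Z.pred a) k) by lia.
    apply Z.divide_sub_r; auto. rewrite zfact_S. apply Z.mul_divide_mono_l. auto.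
Qed.

Lemma zbinom_spec a k : zfact k * zbinom a k = zfalling a k.
Proof. unfold zbinom. destruct (fall_div k a) as [q Hq]. rewrite Hq.
  rewrite Z.div_mul by (pose proof (zfact_pos k); lia). ring. Qed.

Lemma fall_neg1 k : zfalling (-1) k = (-1) ^ Z.of_nat k * zfact k.
Proof. induction k. reflexivity. rewrite fall_S, IHk, zfact_S, Nat2Z.inj_succ, Z.pow_succ_r by lia. ring. Qed.

Lemma zbinom_neg1 k : zbinom (-1) k = (-1) ^ Z.of_nat k.
Proof. unfold zbinom. rewrite fall_neg1. rewrite Z.div_mul by (pose proof (zfact_pos k); lia). auto. Qed.

Lemma fall_cong q a b k : (q | a - b) -> (q | zfalling a k - zfalling b k).
Proof. intros H. induction k. change (q | 1 - 1). apply cg_refl. rewrite !fall_S. apply cg_mul; auto.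
  apply cg_sub; auto. apply cg_refl. Qed.

Lemma fall_nat_big (X k : nat) : (X < k)%nat -> zfalling (Z.of_nat X) k = 0.
Proof. induction k; intros H. lia. rewrite fall_S. destruct (Nat.eq_dec X k). subst. ring.
  rewrite IHk by lia. ring. Qed.

Fixpoint cb (n k : nat) : Z :=
  match n, k with
  | _, O => 1
  | O, S _ => 0
  | S n', S k' => cb n' k' + cb n' (S k')
  end.

Lemma cb_n0 X : cb X 0 = 1. Proof. destruct X; auto. Qed.

Lemma cb_fall X k : zfact k * cb X k = zfalling (Z.of_nat X) k.
Proof. revert k; induction X; intros k; destruct k; simpl cb.
  - reflexivity.
  - rewrite fall_left. simpl. ring.
  - reflexivity.
  - rewrite Z.mul_add_distr_l. rewrite zfact_S at 1. rewrite <- Z.mul_assoc, IHX, IHX.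
    rewrite Nat2Z.inj_succ, <- Z.add_1_r, fall_pascal. ring.
Qed.

Lemma cb_zero X k : (X < k)%nat -> cb X k = 0.
Proof. intros H. pose proof (cb_fall X k). rewrite fall_nat_big in H0 by auto.
  pose proof (zfact_pos k). nia. Qed.

Definition T (a : Z) (psi : nat -> Z) (X : nat) : Z :=
  zs (fun k => (-1) ^ Z.of_nat k * zfalling a k * cb X k * psi (X - k)%nat) (S X).

Lemma T_0 a psi : T a psi 0 = psi 0%nat.
Proof. unfold T. cbn [zs]. change (Z.of_nat 0) with 0. change (zfalling a 0) with 1.
  change (cb 0 0) with 1. change (0-0)%nat with 0%nat. rewrite Z.pow_0_r. ring. Qed.

Lemma T_ext a psi1 psi2 X : (forall j, (j <= X)%nat -> psi1 j = psi2 j) -> T a psi1 X = T a psi2 X.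
Proof. intros H. unfold T. apply zs_ext. intros i Hi. rewrite H by lia. auto. Qed.

Lemma T_lin a psi1 psi2 c X : T a (fun j => psi1 j - c * psi2 j) X = T a psi1 X - c * T a psi2 X.
Proof. unfold T. rewrite <- zs_scal.
  replace (zs (fun k => (-1) ^ Z.of_nat k * zfalling a k * cb X k * psi1 (X - k)%nat) (S X) -
           zs (fun i => c * ((-1) ^ Z.of_nat i * zfalling a i * cb X i * psi2 (X - i)%nat)) (S X))
   with (zs (fun k => (-1) ^ Z.of_nat k * zfalling a k * cb X k * psi1 (X - k)%nat +
                      (-1) * (c * ((-1) ^ Z.of_nat k * zfalling a k * cb X k * psi2 (X - k)%nat))) (S X)).
  apply zs_ext; intros; ring.
  rewrite zs_plus, zs_scal. ring. Qed.

Lemma T_cong q a psi1 psi2 X : (forall j, (j <= X)%nat -> (q | psi1 j - psi2 j)) ->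
  (q | T a psi1 X - T a psi2 X).
Proof. intros H. unfold T. apply zs_cong. intros i Hi. apply cg_mul. apply cg_refl. apply H; lia. Qed.

Lemma T_shift a psi X : T a psi (S X) = T a (fun j => psi (S j)) X - a * T (a-1) psi X.
Proof.
  unfold T.
  set (cbm := fun k => match k with O => 0 | S k' => cb X k' end).
  rewrite (zs_ext (fun k => (-1) ^ Z.of_nat k * zfalling a k * cb (S X) k * psi (S X - k)%nat)
                  (fun k => (-1) ^ Z.of_nat k * zfalling a k * cb X k * psi (S X - k)%nat +
                              (-1) ^ Z.of_nat k * zfalling a k * cbm k * psi (S X - k)%nat)).
  2:{ intros i Hi. destruct i; cbn [cb]; unfold cbm. rewrite cb_n0. ring. ring. }
  rewrite zs_plus. unfold T.
  match goal with |- zs ?g1 _ + zs ?g2 _ = zs ?h1 _ - a * zs ?h2 _ =>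
    assert (E1 : zs g1 (S (S X)) = zs h1 (S X)); [|assert (E2 : zs g2 (S (S X)) = - a * zs h2 (S X))] end.
  - change (zs (fun k : nat => (-1) ^ Z.of_nat k * zfalling a k * cb X k * psi (S X - k)%nat) (S (S X)))
      with (zs (fun k : nat => (-1) ^ Z.of_nat k * zfalling a k * cb X k * psi (S X - k)%nat) (S X) +
            (-1) ^ Z.of_nat (S X) * zfalling a (S X) * cb X (S X) * psi (S X - S X)%nat).
    rewrite cb_zero by lia. rewrite Z.mul_0_r, Z.mul_0_l, Z.add_0_r.
    apply zs_ext. intros i Hi. replace (S X - i)%nat with (S (X - i)) by lia. auto.
  - rewrite zs_shift. unfold cbm at 1. rewrite Z.mul_0_r, Z.mul_0_l, Z.add_0_l.
    rewrite <- zs_scal. apply zs_ext. intros i Hi. unfold cbm.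
    rewrite fall_left. rewrite Nat2Z.inj_succ, Z.pow_succ_r by lia. simpl (S X - S i)%nat. ring.
  - rewrite E1, E2. ring.
Qed.

Lemma T_semi X : forall a b psi, T a (T b psi) X = T (a + b) psi X.
Proof.
  induction X; intros a b psi.
  - rewrite !T_0. auto.
  - rewrite T_shift.
    rewrite (T_ext a (fun j => T b psi (S j)) (fun j => T b (fun j0 => psi (S j0)) j - b * T (b-1) psi j)).
    2:{ intros; apply T_shift. }
    rewrite T_lin. rewrite !IHX. rewrite T_shift.
    replace (a + (b-1)) with (a + b - 1) by ring. replace (a - 1 + b) with (a + b - 1) by ring. ring.
Qed.

Local Close Scope Z_scope.
Local Open Scope Z_scope.

Lemma pow_nat_S p n : p ^ Z.of_nat (S n) = p * p ^ Z.of_nat n.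
Proof. rewrite Nat2Z.inj_succ, Z.pow_succ_r by lia. ring. Qed.

Lemma pow_div_le p m n : (m <= n)%nat -> (p ^ Z.of_nat m | p ^ Z.of_nat n).
Proof. intros H. replace (Z.of_nat n) with (Z.of_nat m + Z.of_nat (n - m)) by lia.
  rewrite Z.pow_add_r by lia. apply Z.divide_factor_l. Qed.

Lemma isZp_chain p x m n : isZp p x -> (m <= n)%nat -> (p ^ Z.of_nat m | x n - x m).
Proof. intros Hx H. induction H. apply cg_refl.
  apply cg_trans with (b := x m0). 2: auto. apply (cg_weak (p ^ Z.of_nat m0)). apply pow_div_le; auto. apply Hx. Qed.

Lemma isZp_const p c : isZp p (zp_const c).
Proof. intros n. apply cg_refl. Qed.
Lemma isZp_add p x y : isZp p x -> isZp p y -> isZp p (zp_add x y).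
Proof. intros Hx Hy n. unfold zp_add. apply cg_add; auto. Qed.
Lemma isZp_sub p x y : isZp p x -> isZp p y -> isZp p (zp_sub x y).
Proof. intros Hx Hy n. unfold zp_sub. apply cg_sub; auto. Qed.
Lemma isZp_mul p x y : isZp p x -> isZp p y -> isZp p (zp_mul x y).
Proof. intros Hx Hy n. unfold zp_mul. apply cg_mul; auto. Qed.
Lemma isZp_opp p x : isZp p x -> isZp p (zp_opp x).
Proof. intros Hx n. unfold zp_opp. replace (- x (S n) - - x n) with (-(x (S n) - x n)) by ring.
  apply Z.divide_opp_r; auto. Qed.

Definition zpf (x : padic) (k : nat) : padic := fun n => zfalling (x n) k.
Lemma isZp_zpf p x k : isZp p x -> isZp p (zpf x k).
Proof. intros Hx n. unfold zpf. apply fall_cong; auto. Qed.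

Lemma zp_sum_eval t N n : zp_sum t N n = zs (fun k => t k n) N.
Proof. induction N; simpl; auto. unfold zp_add. rewrite IHN; auto. Qed.

Lemma isZp_sum p t N : (forall k, (k < N)%nat -> isZp p (t k)) -> isZp p (zp_sum t N).
Proof. induction N; intros H. apply isZp_const. simpl. apply isZp_add; auto. Qed.

Lemma zs_split f a b : (a <= b)%nat -> zs f b = zs f a + zs (fun i => f (a + i)%nat) (b - a).
Proof. intros H. induction H. rewrite Nat.sub_diag. simpl. ring.
  replace (S m - a)%nat with (S (m - a)) by lia. simpl. rewrite IHle.
  replace (a + (m - a))%nat with m by lia. ring. Qed.

Lemma series_lemma p t Kf : (forall k, isZp p (t k)) ->
  (forall n k, (Kf n <= k)%nat -> (p ^ Z.of_nat n | t k n)) ->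
  (forall n, (Kf n <= Kf (S n))%nat) ->
  zp_series_to p t (fun n => zp_sum t (Kf n) n).
Proof.
  intros Ht Hd Hm. split.
  - intros n. rewrite !zp_sum_eval.
    apply cg_trans with (b := zs (fun k => t k n) (Kf (S n))).
    + apply zs_cong. intros i _. apply Ht.
    + rewrite (zs_split _ (Kf n) (Kf (S n))) by auto.
      replace (zs (fun k : nat => t k n) (Kf n) + zs (fun i : nat => t (Kf n + i)%nat n) (Kf (S n) - Kf n) -
         zs (fun k : nat => t k n) (Kf n)) with (zs (fun i : nat => t (Kf n + i)%nat n) (Kf (S n) - Kf n)) by ring.
      apply zs_div. intros i _. apply Hd. lia.
  - intros n. exists (Kf n). intros N HN. unfold zp_eqm. rewrite !zp_sum_eval.
    rewrite (zs_split _ (Kf n) N) by auto.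
    replace (zs (fun k : nat => t k n) (Kf n) + zs (fun i : nat => t (Kf n + i)%nat n) (N - Kf n) -
         zs (fun k : nat => t k n) (Kf n)) with (zs (fun i : nat => t (Kf n + i)%nat n) (N - Kf n)) by ring.
    apply zs_div. intros i _. apply Hd. lia.
Qed.

Lemma divide_mul_both a b c d : (a | b) -> (c | d) -> (a * c | b * d).
Proof. intros [u Hu] [v Hv]. exists (u * v). subst. ring. Qed.

Lemma zfact_mono m j : (zfact m | zfact (m + j)).
Proof. induction j. rewrite Nat.add_0_r. apply Z.divide_refl.
  replace (m + S j)%nat with (S (m + j)) by lia. rewrite zfact_S. apply Z.divide_mul_r. auto. Qed.

Lemma zfact_pdiv p n : 1 < p -> (p ^ Z.of_nat n | zfact (Z.to_nat p * n)).
Proof. intros Hp. induction n. apply Z.divide_1_l.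
  destruct (Z.to_nat p) as [|q] eqn:Eq. lia.
  replace (S q * S n)%nat with (S (S q * n + q)) by lia.
  rewrite zfact_S, pow_nat_S. apply divide_mul_both.
  - exists (Z.of_nat (S n)). rewrite Nat2Z.inj_add, Nat2Z.inj_mul. 
    replace (Z.of_nat (S q)) with p by lia. lia.
  - eapply Z.divide_trans. apply IHn. apply zfact_mono. Qed.

Lemma zfact_pdiv_ge p n k : 1 < p -> (Z.to_nat p * n <= k)%nat -> (p ^ Z.of_nat n | zfact k).
Proof. intros Hp H. eapply Z.divide_trans. apply zfact_pdiv; auto.
  replace k with (Z.to_nat p * n + (k - Z.to_nat p * n))%nat by lia. apply zfact_mono. Qed.

Lemma relprime_pow p w k : prime p -> ~ (p | w) -> rel_prime (p ^ Z.of_nat k) w.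
Proof. intros Hp Hw. apply rel_prime_sym. induction k. simpl. apply rel_prime_sym, rel_prime_1.
  rewrite pow_nat_S. apply rel_prime_mult; auto. apply rel_prime_sym, prime_rel_prime; auto. Qed.

Lemma gcd_cancel p D V n : prime p -> ~ (p ^ Z.of_nat V | D) ->
  forall w, (p ^ Z.of_nat (n + V) | D * w) -> (p ^ Z.of_nat n | w).
Proof.
  intros Hp HV. pose proof (prime_ge_2 p Hp) as Hp2. induction n; intros w H. apply Z.divide_1_l.
  assert (Hn : (p ^ Z.of_nat n | w)). { apply IHn. eapply Z.divide_trans; [|apply H]. apply pow_div_le. lia. }
  destruct Hn as [w' Hw']. subst w.
  destruct (Zdivide_dec p w') as [[u Hu]|Hnd].
  - subst. exists u. rewrite pow_nat_S. ring.
  - exfalso. apply HV.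
    assert (H2 : (p ^ Z.of_nat (S V) | D * w')).
    { replace (Z.of_nat (S n + V)) with (Z.of_nat n + Z.of_nat (S V)) in H by lia.
      rewrite Z.pow_add_r in H by lia.
      replace (D * (w' * p ^ Z.of_nat n)) with (p ^ Z.of_nat n * (D * w')) in H by ring.
      apply Z.mul_divide_cancel_l in H; auto. apply Z.pow_nonzero; lia. }
    rewrite Z.mul_comm in H2. apply Gauss in H2. 2: apply relprime_pow; auto.
    eapply Z.divide_trans; [|apply H2]. apply pow_div_le; lia.
Qed.

Lemma cancel_lemma p D z : prime p -> 0 < D -> isZp p z ->
  (forall n, (p ^ Z.of_nat n | D * z n)) -> forall n, (p ^ Z.of_nat n | z n).
Proof.
  intros Hp HD Hz H n. pose proof (prime_ge_2 p Hp).
  set (V := Z.to_nat D).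
  assert (HV : ~ (p ^ Z.of_nat V | D)).
  { intros Hc. apply Z.divide_pos_le in Hc; auto. unfold V in Hc. rewrite Z2Nat.id in Hc by lia.
    pose proof (Z.pow_gt_lin_r p D). lia. }
  assert (H1 : (p ^ Z.of_nat n | z (n + V)%nat)). { eapply gcd_cancel; eauto. }
  pose proof (isZp_chain p z n (n + V) Hz ltac:(lia)).
  replace (z n) with (z (n+V)%nat - (z (n + V)%nat - z n)) by ring. apply Z.divide_sub_r; auto.
Qed.

Lemma rep_ext p X Y q : (forall n, X n = Y n) -> zp_of_rat p X q -> zp_of_rat p Y q.
Proof. intros E H n. unfold zp_eqm, zp_mul, zp_const in *. rewrite <- E. apply H. Qed.

Lemma rep_const p z : zp_of_rat p (zp_const z) (inject_Z z).
Proof. intros n. unfold zp_eqm, zp_mul, zp_const, inject_Z. cbn [Qden Qnum]. replace (Z.pos 1 * z - z) with 0 by ring. apply Z.divide_0_r. Qed.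

Lemma rep_add p X Y q q' : zp_of_rat p X q -> zp_of_rat p Y q' -> zp_of_rat p (zp_add X Y) (q + q').
Proof. destruct q as [a b], q' as [c d]. intros H1 H2 n. specialize (H1 n); specialize (H2 n).
  unfold zp_eqm, zp_mul, zp_const, zp_add in *. cbn [Qnum Qden Qplus Qmult Qopp] in *. rewrite Pos2Z.inj_mul.
  replace (Z.pos b * Z.pos d * (X n + Y n) - (a * Z.pos d + c * Z.pos b))
    with (Z.pos d * (Z.pos b * X n - a) + Z.pos b * (Z.pos d * Y n - c)) by ring.
  apply Z.divide_add_r; apply Z.divide_mul_r; auto. Qed.

Lemma rep_mul p X Y q q' : zp_of_rat p X q -> zp_of_rat p Y q' -> zp_of_rat p (zp_mul X Y) (q * q').
Proof. destruct q as [a b], q' as [c d]. intros H1 H2 n. specialize (H1 n); specialize (H2 n).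
  unfold zp_eqm, zp_mul, zp_const in *. cbn [Qnum Qden Qplus Qmult Qopp] in *. rewrite Pos2Z.inj_mul.
  replace (Z.pos b * Z.pos d * (X n * Y n) - a * c)
    with ((Z.pos b * X n - a) * (Z.pos d * Y n) + a * (Z.pos d * Y n - c)) by ring.
  apply Z.divide_add_r; [apply Z.divide_mul_l|apply Z.divide_mul_r]; auto. Qed.

Lemma rep_opp p X q : zp_of_rat p X q -> zp_of_rat p (zp_opp X) (- q).
Proof. destruct q as [a b]. intros H1 n. specialize (H1 n).
  unfold zp_eqm, zp_mul, zp_const, zp_opp in *. cbn [Qnum Qden Qplus Qmult Qopp] in *.
  replace (Z.pos b * - X n - - a) with (-(Z.pos b * X n - a)) by ring. apply Z.divide_opp_r; auto. Qed.

Lemma rep_sub p X Y q q' : zp_of_rat p X q -> zp_of_rat p Y q' -> zp_of_rat p (zp_sub X Y) (q - q').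
Proof. intros. apply rep_ext with (zp_add X (zp_opp Y)). intros; reflexivity.
  apply rep_add; auto. apply rep_opp; auto. Qed.

Lemma rep_fall p x q k : zp_of_rat p x q -> zp_of_rat p (zpf x k) (qfalling q k).
Proof. intros H. induction k. apply rep_ext with (zp_const 1). reflexivity. apply rep_const.
  apply rep_ext with (zp_mul (zpf x k) (zp_sub x (zp_const (Z.of_nat k)))). reflexivity.
  simpl. apply rep_mul; auto. apply rep_sub; auto. apply rep_const. Qed.

Lemma rep_sum p t qt N : (forall k, (k < N)%nat -> zp_of_rat p (t k) (qt k)) ->
  zp_of_rat p (zp_sum t N) (qsum qt N).
Proof. induction N; intros H. apply rep_const. simpl. apply rep_add; auto. Qed.

Lemma rep_unique p X Y q q' : prime p -> isZp p X -> isZp p Y -> zp_of_rat p X q -> zp_of_rat p Y q' ->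
  (q == q')%Q -> zp_eq p X Y.
Proof.
  destruct q as [a b], q' as [c d]. intros Hp HX HY H1 H2 Hq.
  unfold Qeq in Hq; cbn [Qnum Qden] in Hq.
  intros n. unfold zp_eqm.
  apply (cancel_lemma p (Z.pos b * Z.pos d) (fun n => X n - Y n)); auto. lia.
  apply isZp_sub; auto.
  intros m. specialize (H1 m); specialize (H2 m). unfold zp_eqm, zp_mul, zp_const in *. cbn [Qnum Qden Qplus Qmult Qopp] in *.
  replace (Z.pos b * Z.pos d * (X m - Y m)) with (Z.pos d * (Z.pos b * X m - a) - Z.pos b * (Z.pos d * Y m - c) + (a * Z.pos d - c * Z.pos b)) by ring.
  rewrite Hq. replace (c * Z.pos b - c * Z.pos b) with 0 by ring. rewrite Z.add_0_r.
  apply Z.divide_sub_r; apply Z.divide_mul_r; auto.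
Qed.

Local Close Scope Z_scope.
Local Open Scope R_scope.

Fixpoint rsum (f : nat -> R) (n : nat) : R :=
  match n with O => 0 | S n' => rsum f n' + f n' end.

Lemma rsum_ext f g n : (forall i, (i < n)%nat -> f i = g i) -> rsum f n = rsum g n.
Proof. induction n; simpl; intros H; auto. rewrite IHn by (intros; apply H; lia). rewrite H by lia. auto. Qed.

Lemma rsum_plus f g n : rsum (fun i => f i + g i) n = rsum f n + rsum g n.
Proof. induction n; simpl; [ring| rewrite IHn; ring]. Qed.

Lemma rsum_scal c f n : rsum (fun i => c * f i) n = c * rsum f n.
Proof. induction n; simpl; [ring| rewrite IHn; ring]. Qed.

Lemma rsum_scal_r c f n : rsum (fun i => f i * c) n = rsum f n * c.
Proof. induction n; simpl; [ring| rewrite IHn; ring]. Qed.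

Lemma rsum_zero f n : (forall i, (i < n)%nat -> f i = 0) -> rsum f n = 0.
Proof. induction n; simpl; intros H; auto. rewrite IHn, H by (try intros; try apply H; lia). ring. Qed.

Lemma rsum_shift f n : rsum f (S n) = f 0%nat + rsum (fun i => f (S i)) n.
Proof. induction n. simpl; ring. change (rsum f (S (S n))) with (rsum f (S n) + f (S n)). rewrite IHn. simpl; ring. Qed.

Lemma rsum_tail f m n : (m <= n)%nat -> (forall i, (m <= i < n)%nat -> f i = 0) -> rsum f n = rsum f m.
Proof. induction n; intros Hmn H. assert (m = 0)%nat by lia. subst; auto.
  destruct (Nat.eq_dec m (S n)). subst; auto. simpl. rewrite IHn by (try lia; intros; apply H; lia).
  rewrite H by lia. ring. Qed.

Lemma rsum_swap g n m : rsum (fun i => rsum (fun k => g i k) m) n = rsum (fun k => rsum (fun i => g i k) n) m.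
Proof. induction n; simpl. rewrite rsum_zero; auto. rewrite IHn. rewrite <- rsum_plus. auto. Qed.

Lemma rsum_rev f m : rsum (fun i => f (m - i)%nat) (S m) = rsum f (S m).
Proof. induction m. simpl; auto.
  rewrite rsum_shift. replace (S m - 0)%nat with (S m) by lia.
  rewrite (rsum_ext (fun i => f (S m - S i)%nat) (fun i => f (m - i)%nat)) by (intros; f_equal).
  rewrite IHm. change (rsum f (S (S m))) with (rsum f (S m) + f (S m)). ring. Qed.

Lemma rsum_tri g n : rsum (fun i => rsum (fun j => g i j) (S i)) (S n) =
  rsum (fun j => rsum (fun i => g (j + i)%nat j) (S (n - j))) (S n).
Proof.
  induction n. simpl. auto.
  change (rsum (fun i => rsum (fun j => g i j) (S i)) (S (S n))) with
    (rsum (fun i => rsum (fun j => g i j) (S i)) (S n) + rsum (fun j => g (S n) j) (S (S n))).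
  rewrite IHn.
  change (rsum (fun j => rsum (fun i => g (j + i)%nat j) (S (S n - j))) (S (S n))) with
    (rsum (fun j => rsum (fun i => g (j + i)%nat j) (S (S n - j))) (S n) +
     rsum (fun i => g (S n + i)%nat (S n)) (S (S n - S n))).
  replace (S (S n - S n)) with 1%nat by lia. simpl (rsum _ 1). rewrite Nat.add_0_r.
  rewrite (rsum_ext (fun j => rsum (fun i => g (j + i)%nat j) (S (S n - j)))
             (fun j => rsum (fun i => g (j + i)%nat j) (S (n - j)) + g (S n) j)).
  2:{ intros i Hi. replace (S (S n - i)) with (S (S (n - i))) by lia.
      change (rsum (fun i0 : nat => g (i + i0)%nat i) (S (S (n - i)))) with
        (rsum (fun i0 : nat => g (i + i0)%nat i) (S (n - i)) + g (i + S (n - i))%nat i).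
      replace (i + S (n - i))%nat with (S n) by lia. auto. }
  rewrite rsum_plus. change (rsum (fun j => g (S n) j) (S (S n))) with (rsum (fun j => g (S n) j) (S n) + g (S n) (S n)).
  rewrite (rsum_ext (fun j => g (S n) j) (g (S n))) by auto. ring.
Qed.

Lemma rsum_S f n : rsum f (S n) = rsum f n + f n. Proof. reflexivity. Qed.

Definition conv (a b : nat -> R) (n : nat) : R := rsum (fun i => a i * b (n - i)%nat) (S n).

Lemma conv_comm a b n : conv a b n = conv b a n.
Proof. unfold conv. rewrite <- rsum_rev. apply rsum_ext. intros i Hi.
  replace (n - (n - i))%nat with i by lia. ring. Qed.

Lemma conv_assoc a b c n : conv (conv a b) c n = conv a (conv b c) n.
Proof. unfold conv.
  rewrite (rsum_ext (fun i => rsum (fun i0 => a i0 * b (i - i0)%nat) (S i) * c (n - i)%nat)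
     (fun i => rsum (fun j => a j * b (i - j)%nat * c (n - i)%nat) (S i))) by (intros; rewrite <- rsum_scal_r; auto).
  rewrite rsum_tri. apply rsum_ext. intros j Hj. rewrite <- rsum_scal. apply rsum_ext. intros i Hi.
  replace (j + i - j)%nat with i by lia. replace (n - (j + i))%nat with (n - j - i)%nat by lia. ring. Qed.

Lemma conv_ext_l a a' b n : (forall m, a m = a' m) -> conv a b n = conv a' b n.
Proof. intros H; unfold conv; apply rsum_ext; intros; rewrite H; auto. Qed.
Lemma conv_ext_r a b b' n : (forall m, b m = b' m) -> conv a b n = conv a b' n.
Proof. intros H; unfold conv; apply rsum_ext; intros; rewrite H; auto. Qed.
Lemma conv_scal_l c a b n : conv (fun m => c * a m) b n = c * conv a b n.
Proof. unfold conv. rewrite <- rsum_scal. apply rsum_ext; intros; ring. Qed.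

Definition delta (n : nat) : R := match n with O => 1 | S _ => 0 end.

Lemma conv_delta_l b n : conv delta b n = b n.
Proof. unfold conv. rewrite rsum_shift. rewrite rsum_zero. simpl. rewrite Nat.sub_0_r. ring.
  intros; simpl; ring. Qed.

Definition theta (a : nat -> R) (n : nat) : R := INR n * a n.

Lemma theta_conv a b n : theta (conv a b) n = conv (theta a) b n + conv a (theta b) n.
Proof. unfold theta, conv. rewrite <- rsum_plus, <- rsum_scal. apply rsum_ext. intros i Hi.
  rewrite minus_INR by lia. ring. Qed.

Fixpoint pw (f : nat -> R) (k : nat) : nat -> R :=
  match k with O => delta | S k' => conv (pw f k') f end.

Lemma pw_zero f : f 0%nat = 0 -> forall k i, (i < k)%nat -> pw f k i = 0.
Proof. intros Hf. induction k; intros i Hi. lia. simpl. unfold conv. apply rsum_zero.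
  intros l Hl. destruct (Nat.lt_ge_cases l k). rewrite IHk by auto. ring.
  replace (i - l)%nat with 0%nat by lia. rewrite Hf. ring. Qed.

Lemma pw_theta f k n : theta (pw f (S k)) n = INR (S k) * conv (pw f k) (theta f) n.
Proof. revert n. induction k; intros n.
  - simpl pw. unfold theta. rewrite conv_delta_l, conv_delta_l. simpl. ring.
  - change (pw f (S (S k))) with (conv (pw f (S k)) f). rewrite theta_conv.
    rewrite (conv_ext_l _ (fun m => INR (S k) * conv (pw f k) (theta f) m)) by auto.
    rewrite conv_scal_l, conv_assoc. rewrite (conv_ext_r (pw f k) _ (conv f (theta f))) by (intros; apply conv_comm).
    rewrite <- conv_assoc. change (conv (pw f k) f) with (pw f (S k)).
    rewrite (S_INR (S k)). ring.
Qed.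

Definition Eco (f : nat -> R) (n : nat) : R := rsum (fun k => pw f k n / INR (fact k)) (S n).

Lemma Eco_theta f n : f 0%nat = 0 -> INR n * Eco f n = conv (Eco f) (theta f) n.
Proof.
  intros Hf. unfold Eco. rewrite <- rsum_scal. rewrite rsum_shift.
  replace (INR n * (pw f 0 n / INR (fact 0))) with 0.
  2:{ destruct n; simpl; field. }
  rewrite (rsum_ext _ (fun k => conv (pw f k) (theta f) n / INR (fact k))).
  2:{ intros i Hi. replace (INR n * (pw f (S i) n / INR (fact (S i)))) with (theta (pw f (S i)) n / INR (fact (S i))) by (unfold theta, Rdiv; ring).
      rewrite pw_theta. rewrite fact_simpl, mult_INR. field. split. apply INR_fact_neq_0. rewrite S_INR. pose proof (pos_INR i). lra. }
  unfold conv at 2.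
  rewrite (rsum_ext (fun i => rsum (fun k => pw f k i / INR (fact k)) (S i) * theta f (n - i)%nat)
    (fun i => rsum (fun k => pw f k i / INR (fact k) * theta f (n - i)%nat) (S n))).
  2:{ intros i Hi. rewrite rsum_scal_r. f_equal. symmetry. apply rsum_tail. lia.
      intros k Hk. rewrite pw_zero by (auto; lia). unfold Rdiv; ring. }
  rewrite rsum_swap. rewrite (rsum_S (fun k => rsum (fun i => pw f k i / INR (fact k) * theta f (n - i)%nat) (S n)) n).
  replace (rsum (fun i => pw f n i / INR (fact n) * theta f (n - i)%nat) (S n)) with 0.
  2:{ symmetry. apply rsum_zero. intros i Hi. destruct (Nat.lt_ge_cases i n). rewrite pw_zero by auto. unfold Rdiv; ring.
      replace (n - i)%nat with 0%nat by lia. unfold theta. simpl. ring. }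
  rewrite Rplus_0_l, Rplus_0_r. apply rsum_ext. intros k Hk. unfold conv. unfold Rdiv. rewrite <- rsum_scal_r.
  apply rsum_ext. intros; ring.
Qed.

Lemma fall_fact (j k : nat) : (k <= j)%nat -> (zfalling (Z.of_nat j) k * zfact (j - k) = zfact j)%Z.
Proof. induction k; intros H. cbn [zfalling]. rewrite Nat.sub_0_r. ring.
  rewrite fall_S. replace (j - k)%nat with (S (j - S k)) in IHk by lia. rewrite zfact_S in IHk.
  rewrite <- IHk by lia. rewrite Nat2Z.inj_sub, Nat2Z.inj_succ by lia. ring. Qed.

Lemma cb_fact (j k : nat) : (k <= j)%nat -> (zfact k * cb j k * zfact (j - k) = zfact j)%Z.
Proof. intros H. rewrite cb_fall. apply fall_fact; auto. Qed.

Local Open Scope R_scope.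

Fixpoint rfall (x : R) (k : nat) : R :=
  match k with O => 1 | S k' => rfall x k' * (x - INR k') end.

Lemma rfall_left x k : rfall x (S k) = x * rfall (x - 1) k.
Proof. revert x; induction k; intros x. simpl; ring.
  change (rfall x (S (S k))) with (rfall x (S k) * (x - INR (S k))). rewrite IHk. simpl rfall.
  rewrite S_INR. ring. Qed.

Lemma Q2R_inject z : Q2R (inject_Z z) = IZR z.
Proof. unfold Q2R. simpl. field. Qed.

Lemma Q2R_qsum f n : Q2R (qsum f n) = rsum (fun i => Q2R (f i)) n.
Proof. induction n; simpl. apply RMicromega.Q2R_0. rewrite Q2R_plus, IHn; auto. Qed.

Lemma Q2R_qfact k : Q2R (qfact k) = INR (fact k).
Proof. unfold qfact, zfact. rewrite Q2R_inject, INR_IZR_INZ. auto. Qed.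

Lemma qfact_nz k : ~ (qfact k == 0)%Q.
Proof. intros H. apply Qeq_eqR in H. rewrite Q2R_qfact, RMicromega.Q2R_0 in H. apply (INR_fact_neq_0 k); auto. Qed.

Lemma Q2R_qfalling q k : Q2R (qfalling q k) = rfall (Q2R q) k.
Proof. induction k; simpl. apply RMicromega.Q2R_1. rewrite Q2R_mult, Q2R_minus, IHk, Q2R_inject, INR_IZR_INZ. auto. Qed.

Lemma Q2R_ps_pow f k n : Q2R (ps_pow f k n) = pw (fun i => Q2R (f i)) k n.
Proof. revert n; induction k; intros n.
  - destruct n; simpl. apply RMicromega.Q2R_1. apply RMicromega.Q2R_0.
  - simpl. unfold ps_mul, conv. rewrite Q2R_qsum. apply rsum_ext. intros i _. rewrite Q2R_mult, IHk. auto. Qed.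

Lemma Q2R_exp f n : Q2R (ps_exp_coef f n) = Eco (fun i => Q2R (f i)) n.
Proof. unfold ps_exp_coef, Eco. rewrite Q2R_qsum. apply rsum_ext. intros i _.
  rewrite Q2R_div by apply qfact_nz. rewrite Q2R_ps_pow, Q2R_qfact. auto. Qed.

Lemma Q2R_sign k : Q2R (qsignpow k) = (-1) ^ k.
Proof. unfold qsignpow. rewrite Q2R_inject, <- pow_IZR. auto. Qed.

Lemma theta_fr r k : ~ (r == 0)%Q ->
  theta (fun i => Q2R (fr_coef r i)) (S k) = (-1) ^ k * rfall (/ Q2R r - 1) k / INR (fact k).
Proof. intros hr. unfold theta, fr_coef, qbinom.
  rewrite !Q2R_mult, Q2R_opp, Q2R_sign, Q2R_div by apply qfact_nz. rewrite Q2R_qfalling, Q2R_qfact, Q2R_inv by auto.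
  rewrite rfall_left. assert (Q2R r <> 0). { intros H. apply hr. apply eqR_Qeq. rewrite H, RMicromega.Q2R_0. auto. }
  rewrite fact_simpl, mult_INR. simpl pow. field. split. apply INR_fact_neq_0. split. auto.
  rewrite S_INR. pose proof (pos_INR k). lra. Qed.

Lemma phi_rec r j : ~ (r == 0)%Q ->
  (phi_coef r (S j) == qsum (fun k => inject_Z ((-1) ^ Z.of_nat k * cb j k) * qfalling (/ r - 1) k * phi_coef r (j - k)) (S j))%Q.
Proof.
  intros hr. apply eqR_Qeq. rewrite Q2R_qsum. unfold phi_coef. rewrite Q2R_mult, Q2R_qfact, Q2R_exp.
  set (F := fun i => Q2R (fr_coef r i)).
  assert (HF0 : F 0%nat = 0). { unfold F. simpl. apply RMicromega.Q2R_0. }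
  pose proof (Eco_theta F (S j) HF0) as HE.
  rewrite fact_simpl, mult_INR, (Rmult_comm (INR (S j))), Rmult_assoc, HE.
  unfold conv. rewrite rsum_S. replace (S j - S j)%nat with 0%nat by lia.
  replace (theta F 0) with 0 by (unfold theta; simpl; ring). rewrite Rmult_0_r, Rplus_0_r.
  rewrite <- rsum_rev, <- rsum_scal. apply rsum_ext. intros k Hk.
  replace (S j - (j - k))%nat with (S k) by lia. unfold F. rewrite theta_fr by auto. fold F.
  rewrite !Q2R_mult, Q2R_inject, Q2R_qfalling, Q2R_qfact, Q2R_exp. fold F.
  rewrite Q2R_minus, Q2R_inv by auto. rewrite RMicromega.Q2R_1.
  pose proof (cb_fact j k ltac:(lia)) as Hc. apply (f_equal IZR) in Hc.
  rewrite !mult_IZR in Hc. unfold zfact in Hc. rewrite <- !INR_IZR_INZ in Hc.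
  rewrite mult_IZR, <- pow_IZR.
  rewrite <- Hc. field. apply INR_fact_neq_0.
Qed.

Local Open Scope Z_scope.

Lemma sq1 k : (-1) ^ Z.of_nat k * (-1) ^ Z.of_nat k = 1.
Proof. rewrite <- Z.pow_mul_l. replace (-1 * -1) with 1 by ring. apply Z.pow_1_l. lia. Qed.

Lemma fall_binom a k : zfalling a k = zfact k * zbinom a k.
Proof. symmetry; apply zbinom_spec. Qed.

Lemma term_eval phi y k n :
  S_term phi y (zp_const (-1)) k n =
  zfalling (y (n + k)%nat) k * phi (zp_sub (zp_const (-1)) (zp_const (Z.of_nat k))) n.
Proof. unfold S_term, zp_mul, zp_const, zp_binom. rewrite zbinom_neg1.
  rewrite fall_binom. pose proof (sq1 k). 
  transitivity (((-1) ^ Z.of_nat k * (-1) ^ Z.of_nat k) * (zfact k * zbinom (y (n + k)%nat) k) *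
   phi (zp_sub (fun _ : nat => -1) (fun _ : nat => Z.of_nat k)) n). ring. rewrite H. ring. Qed.

Lemma S_conv p phi y : prime p -> zp_continuous p phi -> isZp p y ->
  S_op_to p phi y (zp_const (-1))
    (fun n => zp_sum (S_term phi y (zp_const (-1))) (Z.to_nat p * n) n).
Proof.
  intros Hp Hc Hy. pose proof (prime_ge_2 p Hp) as Hp2.
  apply series_lemma.
  - intros k n. rewrite !term_eval. apply cg_mul.
    + apply fall_cong. apply (cg_weak (p ^ Z.of_nat (n + k))). apply pow_div_le; lia.
      apply isZp_chain; auto; lia.
    + apply (proj1 (Hc _ (isZp_sub p _ _ (isZp_const p _) (isZp_const p _)))).
  - intros n k Hk. rewrite term_eval, fall_binom. apply Z.divide_mul_l. apply Z.divide_mul_l.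
    apply zfact_pdiv_ge; auto; lia.
  - intros n. lia.
Qed.

Lemma zp_eqm_mono p m m' x y : isZp p x -> isZp p y -> (m <= m')%nat -> zp_eqm p m' x y -> zp_eqm p m x y.
Proof. intros Hx Hy Hm H. unfold zp_eqm in *.
  replace (x m - y m) with ((x m' - y m') - (x m' - x m) + (y m' - y m)) by ring.
  apply Z.divide_add_r. apply Z.divide_sub_r. eapply cg_weak; [apply pow_div_le; eauto|auto].
  apply isZp_chain; auto. apply isZp_chain; auto. Qed.

Definition xk (k : nat) : padic := zp_sub (zp_const (-1)) (zp_const (Z.of_nat k)).

Lemma cont_finite p phi n K : zp_continuous p phi ->
  exists m, (forall k, (k < K)%nat -> forall y, isZp p y -> zp_eqm p m (xk k) y -> zp_eqm p n (phi (xk k)) (phi y)) /\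
            (forall y, isZp p y -> zp_eqm p m (zp_const 0) y -> zp_eqm p n (phi (zp_const 0)) (phi y)).
Proof.
  intros Hc. induction K.
  - destruct (proj2 (Hc (zp_const 0) (isZp_const p 0)) n) as [m Hm]. exists m. split; auto. intros; lia.
  - destruct IHK as [m [H1 H2]].
    destruct (proj2 (Hc (xk K) (isZp_sub p _ _ (isZp_const p _) (isZp_const p _))) n) as [m' Hm'].
    exists (Nat.max m m'). split.
    + intros k Hk y Hy Hxy. destruct (Nat.eq_dec k K).
      * subst. apply Hm'; auto. apply (zp_eqm_mono p m' (Nat.max m m')); auto; [apply isZp_sub; apply isZp_const | lia].
      * apply H1; auto. lia. apply (zp_eqm_mono p m (Nat.max m m')); auto; [apply isZp_sub; apply isZp_const | lia].
    + intros y Hy Hxy. apply H2; auto. apply (zp_eqm_mono p m (Nat.max m m')); auto; [apply isZp_const | lia].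
Qed.

Lemma T_trunc p n a psi X K : 1 < p -> (Z.to_nat p * n <= K)%nat -> (K <= X)%nat ->
  (p ^ Z.of_nat n | Z.of_nat X + 1) ->
  (p ^ Z.of_nat n | T a psi X - zs (fun k => zfalling a k * psi (X - k)%nat) K).
Proof.
  intros Hp HK HX HM. unfold T. rewrite (zs_split _ K (S X)) by lia.
  match goal with |- (_ | zs ?g K + ?t - zs ?h K) => replace (zs g K + t - zs h K) with ((zs g K - zs h K) + t) by ring end.
  apply Z.divide_add_r.
  - apply zs_cong. intros k Hk.
    rewrite (fall_binom a k). rewrite Z.mul_comm with (n := zfact k).
    replace ((-1) ^ Z.of_nat k * (zbinom a k * zfact k) * cb X k * psi (X - k)%nat -
             zbinom a k * zfact k * psi (X - k)%nat)
      with ((-1) ^ Z.of_nat k * zbinom a k * psi (X - k)%nat * (zfact k * cb X k - (-1) ^ Z.of_nat k * zfact k)).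
    2:{ transitivity ((-1) ^ Z.of_nat k * (zbinom a k * zfact k) * cb X k * psi (X - k)%nat -
             ((-1) ^ Z.of_nat k * (-1) ^ Z.of_nat k) * zbinom a k * zfact k * psi (X - k)%nat). 2: rewrite sq1; ring. ring. }
    apply Z.divide_mul_r. rewrite cb_fall, <- fall_neg1. apply fall_cong.
    replace (Z.of_nat X - -1) with (Z.of_nat X + 1) by ring. auto.
  - apply zs_div. intros i _. rewrite fall_binom. 
    replace ((-1) ^ Z.of_nat (K + i) * (zfact (K + i) * zbinom a (K + i)) * cb X (K + i) * psi (X - (K + i))%nat)
      with (zfact (K + i) * ((-1) ^ Z.of_nat (K + i) * zbinom a (K + i) * cb X (K + i) * psi (X - (K + i))%nat)) by ring.
    apply Z.divide_mul_l. apply zfact_pdiv_ge; auto; lia.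
Qed.

Lemma T_M p n a psi Mn : (p ^ Z.of_nat n | Z.of_nat Mn) -> (p ^ Z.of_nat n | T a psi Mn - psi Mn).
Proof.
  intros HM. unfold T. rewrite zs_shift. rewrite Nat.sub_0_r, cb_n0. change (zfalling a 0) with 1.
  rewrite Z.pow_0_r. 
  replace (1 * 1 * 1 * psi Mn + zs (fun i => (-1) ^ Z.of_nat (S i) * zfalling a (S i) * cb Mn (S i) * psi (Mn - S i)%nat) Mn - psi Mn)
    with (zs (fun i => (-1) ^ Z.of_nat (S i) * zfalling a (S i) * cb Mn (S i) * psi (Mn - S i)%nat) Mn) by ring.
  apply zs_div. intros i _. rewrite fall_binom.
  replace ((-1) ^ Z.of_nat (S i) * (zfact (S i) * zbinom a (S i)) * cb Mn (S i) * psi (Mn - S i)%nat)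
    with ((zfact (S i) * cb Mn (S i)) * ((-1) ^ Z.of_nat (S i) * zbinom a (S i) * psi (Mn - S i)%nat)) by ring.
  apply Z.divide_mul_l. rewrite cb_fall, fall_left. apply Z.divide_mul_l. auto.
Qed.

Local Close Scope Z_scope.
Local Open Scope Z_scope.

Lemma part1 (r : Q) (hr : ~ (r == 0)%Q) :
  (forall (p : Z), prime p ->
     ~ (p | Qnum (Qred r))%Z -> ~ (p | Zpos (Qden (Qred r)))%Z ->
     forall rinv : padic, isZp p rinv -> zp_of_rat p rinv (/ r)%Q ->
     forall phi : padic -> padic,
       zp_continuous p phi ->
       (forall n : nat, zp_of_rat p (phi (zp_const (Z.of_nat n))) (phi_coef r n)) ->
     forall s : padic, isZp p s ->
       exists L1 L2 : padic,
         S_op_to p phi (zp_sub (zp_add s rinv) (zp_const 1%Z)) (zp_const (-1)%Z) L1 /\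
         S_op_to p phi (zp_sub s (zp_const 1%Z)) (zp_const (-1)%Z) L2 /\
         zp_eq p L1 (zp_add (zp_const 1%Z) (zp_mul s L2))).
Proof.
  intros p Hp _ _ rinv Hr Hrq phi Hc Hphi s Hs.
  pose proof (prime_ge_2 p Hp) as Hp2.
  set (y1 := zp_sub (zp_add s rinv) (zp_const 1)).
  set (y2 := zp_sub s (zp_const 1)).
  assert (Hy1 : isZp p y1). { apply isZp_sub. apply isZp_add; auto. apply isZp_const. }
  assert (Hy2 : isZp p y2). { apply isZp_sub; auto. apply isZp_const. }
  exists (fun n => zp_sum (S_term phi y1 (zp_const (-1))) (Z.to_nat p * n) n).
  exists (fun n => zp_sum (S_term phi y2 (zp_const (-1))) (Z.to_nat p * n) n).
  split. apply S_conv; auto. split. apply S_conv; auto.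
  assert (HphiZ : forall x, isZp p x -> isZp p (phi x)). { intros x Hx. apply (proj1 (Hc x Hx)). }
  intros n. unfold zp_eqm, zp_add, zp_mul, zp_const at 1. rewrite !zp_sum_eval.
  set (K := (Z.to_nat p * n)%nat).
  destruct (cont_finite p phi n K Hc) as [m [Hm1 Hm0]].
  set (N := Nat.max m (Nat.max n (S K))).
  set (M := p ^ Z.of_nat N).
  assert (HMgt : Z.of_nat N < M). { apply Z.pow_gt_lin_r; lia. }
  set (Mn := Z.to_nat M).
  assert (HMn : Z.of_nat Mn = M). { unfold Mn. apply Z2Nat.id. lia. }
  assert (HNK : (S K <= N)%nat) by (unfold N; lia).
  assert (HNn : (n <= N)%nat) by (unfold N; lia).
  assert (HNm : (m <= N)%nat) by (unfold N; lia).
  assert (HMnN : (N < Mn)%nat) by lia.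
  clearbody N.
  set (X := (Mn - 1)%nat).
  assert (HXK : (K <= X)%nat). { unfold X. lia. }
  assert (HX1 : Z.of_nat X + 1 = M). { unfold X. rewrite Nat2Z.inj_sub by lia. lia. }
  assert (HSX : S X = Mn). { unfold X. lia. }
  assert (HMdn : (p ^ Z.of_nat n | M)). { apply pow_div_le. lia. }
  assert (HMdm : (p ^ Z.of_nat m | M)). { apply pow_div_le. lia. }
  set (psi := fun j : nat => phi (zp_const (Z.of_nat j)) n).
  set (Sv := s n). set (C := rinv n - 1).
  assert (HR : forall j, (p ^ Z.of_nat n | psi (S j) - T C psi j)).
  { intros j.
    assert (HV : zp_eq p (phi (zp_const (Z.of_nat (S j))))
      (zp_sum (fun k => zp_mul (zp_mul (zp_const ((-1) ^ Z.of_nat k * cb j k)) (zpf (zp_sub rinv (zp_const 1)) k))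
                               (phi (zp_const (Z.of_nat (j - k))))) (S j))).
    { eapply rep_unique. exact Hp. apply HphiZ, isZp_const.
      apply isZp_sum. intros k _. apply isZp_mul. apply isZp_mul. apply isZp_const.
      apply isZp_zpf. apply isZp_sub; auto. apply isZp_const. apply HphiZ, isZp_const.
      apply Hphi.
      apply rep_sum. intros k _. apply rep_mul. apply rep_mul. apply rep_const. apply rep_fall.
      apply rep_sub. exact Hrq. apply rep_const. apply Hphi.
      apply phi_rec; auto. }
    specialize (HV n). unfold zp_eqm in HV. rewrite zp_sum_eval in HV.
    unfold T. 
    replace (zs (fun k => (-1) ^ Z.of_nat k * zfalling C k * cb j k * psi (j - k)%nat) (S j)) with
      (zs (fun k => zp_mul (zp_mul (zp_const ((-1) ^ Z.of_nat k * cb j k)) (zpf (zp_sub rinv (zp_const 1)) k))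
                               (phi (zp_const (Z.of_nat (j - k)))) n) (S j)).
    exact HV.
    apply zs_ext. intros k _. unfold psi, C. unfold zp_mul. set (w := phi (zp_const (Z.of_nat (j - k))) n). unfold zp_const, zpf, zp_sub. ring. }
  assert (A1 : forall y a, isZp p y -> y n = a ->
     (p ^ Z.of_nat n | zs (fun k => S_term phi y (zp_const (-1)) k n) K - zs (fun k => zfalling a k * psi (X - k)%nat) K)).
  { intros y a Hy Hya. apply zs_cong. intros k Hk. rewrite term_eval. apply cg_mul.
    - apply fall_cong. rewrite <- Hya. apply isZp_chain; auto. lia.
    - unfold psi. apply (Hm1 k Hk). apply isZp_const. unfold zp_eqm, xk, zp_sub, zp_const.
      replace (-1 - Z.of_nat k - Z.of_nat (X - k)) with (- M). apply Z.divide_opp_r; auto.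
      rewrite Nat2Z.inj_sub by lia. lia. }
  assert (D1 := A1 y1 (Sv + C) Hy1 ltac:(unfold y1, zp_sub, zp_add, zp_const, Sv, C; ring)).
  assert (D7 := A1 y2 (Sv - 1) Hy2 ltac:(unfold y2, zp_sub, zp_const, Sv; ring)).
  assert (D2 := T_trunc p n (Sv + C) psi X K ltac:(lia) ltac:(unfold K; lia) HXK ltac:(rewrite HX1; auto)).
  assert (D6 := T_trunc p n (Sv - 1) psi X K ltac:(lia) ltac:(unfold K; lia) HXK ltac:(rewrite HX1; auto)).
  assert (D3 : (p ^ Z.of_nat n | T (Sv + C) psi X - T Sv (fun j => psi (S j)) X)).
  { rewrite <- T_semi. apply T_cong. intros j _. apply cg_sym. apply HR. }
  assert (E4 := T_shift Sv psi X).
  assert (D5 : (p ^ Z.of_nat n | T Sv psi (S X) - 1)).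
  { apply cg_trans with (psi (S X)). apply T_M. rewrite HSX, HMn; auto.
    rewrite HSX. apply cg_trans with (phi (zp_const 0) n).
    - apply cg_sym. apply (Hm0 (zp_const (Z.of_nat Mn))). apply isZp_const.
      unfold zp_eqm, zp_const. rewrite HMn. replace (0 - M) with (- M) by ring. apply Z.divide_opp_r; auto.
    - assert (H0 : zp_eq p (phi (zp_const (Z.of_nat 0))) (zp_const 1)).
      { eapply rep_unique. exact Hp. apply HphiZ, isZp_const. apply isZp_const. apply Hphi. apply rep_const.
        reflexivity. }
      apply H0. }
  rewrite E4 in D5. change (zp_const 1 n) with 1.
  match goal with |- (_ | ?L1 - (1 + _ * ?L2)) =>
   replace (L1 - (1 + Sv * L2)) with
    ((L1 - zs (fun k => zfalling (Sv + C) k * psi (X - k)%nat) K)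
     - (T (Sv + C) psi X - zs (fun k => zfalling (Sv + C) k * psi (X - k)%nat) K)
     + (T (Sv + C) psi X - T Sv (fun j => psi (S j)) X)
     + (T Sv (fun j => psi (S j)) X - Sv * T (Sv - 1) psi X - 1)
     + Sv * (T (Sv - 1) psi X - zs (fun k => zfalling (Sv - 1) k * psi (X - k)%nat) K)
     - Sv * (L2 - zs (fun k => zfalling (Sv - 1) k * psi (X - k)%nat) K)) by (unfold Sv; ring) end.
  repeat first [assumption | apply Z.divide_mul_r; assumption | apply Z.divide_opp_r; assumption | apply Z.divide_opp_r; apply Z.divide_mul_r; assumption | apply Z.divide_sub_r | apply Z.divide_add_r].
Qed.

Local Close Scope Z_scope.
Local Open Scope R_scope.

Definition LL (x : R) : R := ln (1 - x).
Definition gg (rho x : R) : R := exp (- rho * (exp (/ rho * LL x) - 1)).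
Definition cp (rho al be x : R) : R := exp (al * LL x) * cos (be * LL x) * gg rho x.
Definition sp (rho al be x : R) : R := exp (al * LL x) * sin (be * LL x) * gg rho x.

Lemma exp_m1 al x : x < 1 -> exp ((al - 1) * LL x) = exp (al * LL x) / (1 - x).
Proof. intros H. replace ((al - 1) * LL x) with (al * LL x + - LL x) by ring.
  rewrite exp_plus, exp_Ropp. unfold LL. rewrite exp_ln by lra. field. lra. Qed.

Lemma Gr_derive rho a0 b0 x : rho <> 0 -> x < 1 ->
  is_derive (fun x => exp (a0 * LL x) * cos (b0 * LL x) * gg rho x) x
   (cp rho (a0 + / rho - 1) b0 x - (a0 * cp rho (a0 - 1) b0 x - b0 * sp rho (a0 - 1) b0 x)).
Proof.
  intros Hr Hx. unfold cp, sp, gg, LL. auto_derive. lra.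
  replace (1 + - x) with (1 - x) by ring.
  assert (Hu : 0 < 1 - x) by lra.
  assert (E1 : exp ((a0 + / rho - 1) * ln (1 - x)) = exp (a0 * ln (1 - x)) * exp (/ rho * ln (1 - x)) / (1 - x)).
  { replace ((a0 + / rho - 1) * ln (1 - x)) with (a0 * ln (1 - x) + / rho * ln (1 - x) + - ln (1 - x)) by ring.
    rewrite !exp_plus, exp_Ropp, exp_ln by lra. field. lra. }
  assert (E2 : exp ((a0 - 1) * ln (1 - x)) = exp (a0 * ln (1 - x)) / (1 - x)).
  { apply exp_m1; auto. }
  rewrite E1, E2. replace (exp (- rho * (exp (/ rho * ln (1 - x)) + - (1)))) with (exp (- rho * (exp (/ rho * ln (1 - x)) - 1))) by (f_equal; ring).
  set (A := exp (a0 * ln (1 - x))). set (B := exp (/ rho * ln (1 - x))). set (G := exp (- rho * (B - 1))).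
  set (Cc := cos (b0 * ln (1 - x))). set (Ss := sin (b0 * ln (1 - x))). field. split; lra.
Qed.

Lemma Gi_derive rho a0 b0 x : rho <> 0 -> x < 1 ->
  is_derive (fun x => exp (a0 * LL x) * sin (b0 * LL x) * gg rho x) x
   (sp rho (a0 + / rho - 1) b0 x - (a0 * sp rho (a0 - 1) b0 x + b0 * cp rho (a0 - 1) b0 x)).
Proof.
  intros Hr Hx. unfold cp, sp, gg, LL. auto_derive. lra.
  replace (1 + - x) with (1 - x) by ring.
  assert (Hu : 0 < 1 - x) by lra.
  assert (E1 : exp ((a0 + / rho - 1) * ln (1 - x)) = exp (a0 * ln (1 - x)) * exp (/ rho * ln (1 - x)) / (1 - x)).
  { replace ((a0 + / rho - 1) * ln (1 - x)) with (a0 * ln (1 - x) + / rho * ln (1 - x) + - ln (1 - x)) by ring.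
    rewrite !exp_plus, exp_Ropp, exp_ln by lra. field. lra. }
  assert (E2 : exp ((a0 - 1) * ln (1 - x)) = exp (a0 * ln (1 - x)) / (1 - x)).
  { apply exp_m1; auto. }
  rewrite E1, E2. replace (exp (- rho * (exp (/ rho * ln (1 - x)) + - (1)))) with (exp (- rho * (exp (/ rho * ln (1 - x)) - 1))) by (f_equal; ring).
  set (A := exp (a0 * ln (1 - x))). set (B := exp (/ rho * ln (1 - x))). set (G := exp (- rho * (B - 1))).
  set (Cc := cos (b0 * ln (1 - x))). set (Ss := sin (b0 * ln (1 - x))). field. split; lra.
Qed.

Lemma cp_derivable rho al be x : x < 1 -> ex_derive (cp rho al be) x.
Proof. intros Hx. unfold cp, gg, LL. auto_derive. lra. Qed.
Lemma sp_derivable rho al be x : x < 1 -> ex_derive (sp rho al be) x.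
Proof. intros Hx. unfold sp, gg, LL. auto_derive. lra. Qed.
Lemma cp_cont rho al be x : x < 1 -> continuous (cp rho al be) x.
Proof. intros Hx. apply (ex_derive_continuous (cp rho al be)), cp_derivable; auto. Qed.
Lemma sp_cont rho al be x : x < 1 -> continuous (sp rho al be) x.
Proof. intros Hx. apply (ex_derive_continuous (sp rho al be)), sp_derivable; auto. Qed.

Lemma exp_le x y : x <= y -> exp x <= exp y.
Proof. intros H. destruct (Rle_lt_or_eq_dec _ _ H). left; apply exp_increasing; auto. subst; lra. Qed.

Lemma LL_ge0 x : x <= 0 -> 0 <= LL x.
Proof. intros H. unfold LL. destruct (Req_dec x 0). subst. replace (1 - 0) with 1 by ring. rewrite ln_1; lra.
  left. rewrite <- ln_1. apply ln_increasing; lra. Qed.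

Lemma exp_powN x N : exp x ^ N = exp (INR N * x).
Proof. induction N. simpl. rewrite Rmult_0_l, exp_0; auto.
  rewrite S_INR. replace ((INR N + 1) * x) with (x + INR N * x) by ring. rewrite exp_plus, <- IHN. simpl. auto. Qed.

Lemma gg_pos rho x : 0 < gg rho x.
Proof. apply exp_pos. Qed.

Lemma base_bound rho a0 : rho <> 0 -> (0 < rho \/ (rho < 0 /\ a0 < 0)) ->
  exists C d, 0 < C /\ d < 0 /\ forall x, x <= 0 -> exp (a0 * LL x) * gg rho x <= C * exp (d * LL x).
Proof.
  intros Hr [Hp | [Hn Ha]].
  - set (N := (Z.to_nat (up (Rabs (rho * a0))) + 1)%nat).
    assert (HN : rho * a0 < INR N /\ 1 <= INR N).
    { unfold N. rewrite plus_INR, INR_IZR_INZ. destruct (archimed (Rabs (rho * a0))) as [H1 H2].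
      pose proof (Rabs_pos (rho * a0)). pose proof (Rle_abs (rho * a0)).
      assert (0 <= up (Rabs (rho * a0)))%Z. { apply le_IZR. lra. }
      rewrite Z2Nat.id by auto. simpl. lra. }
    exists (exp rho * / (rho / INR N) ^ N), (a0 - INR N / rho).
    assert (HP : 0 < (rho / INR N) ^ N). { apply pow_lt. apply Rdiv_lt_0_compat; lra. }
    split. apply Rmult_lt_0_compat. apply exp_pos. apply Rinv_0_lt_compat; auto.
    split. { set (t := INR N / rho). assert (t * rho = INR N) by (unfold t; field; lra). nra. }
    intros x Hx. pose proof (LL_ge0 x Hx) as HL. set (L := LL x) in *.
    set (w := exp (/ rho * L)).
    assert (Hw : 1 <= w). { unfold w. rewrite <- exp_0. apply exp_le. apply Rmult_le_pos; auto. left; apply Rinv_0_lt_compat; auto. }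
    assert (HE : (rho / INR N) ^ N * w ^ N <= exp (rho * w)).
    { rewrite <- Rpow_mult_distr. replace (exp (rho * w)) with (exp (rho * w / INR N) ^ N).
      apply pow_incr. split. apply Rmult_le_pos. apply Rdiv_le_0_compat; lra. lra.
      pose proof (exp_ineq1_le (rho * w / INR N)). replace (rho / INR N * w) with (rho * w / INR N) by (field; lra). lra.
      rewrite exp_powN. f_equal. field. lra. }
    assert (HQ : 0 < w ^ N). { apply pow_lt. lra. }
    assert (Hg : gg rho x = exp rho * / exp (rho * w)).
    { unfold gg. fold L. fold w. replace (- rho * (w - 1)) with (rho + - (rho * w)) by ring. rewrite exp_plus, exp_Ropp. auto. }
    assert (Hd : exp ((a0 - INR N / rho) * L) = exp (a0 * L) * / w ^ N).
    { unfold w. rewrite exp_powN. replace ((a0 - INR N / rho) * L) with (a0 * L + - (INR N * (/ rho * L))) by (field; lra).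
      rewrite exp_plus, exp_Ropp. auto. }
    rewrite Hg, Hd.
    assert (Hi : / exp (rho * w) <= / (rho / INR N) ^ N * / w ^ N).
    { rewrite <- Rinv_mult. apply Rinv_le_contravar; auto. apply Rmult_lt_0_compat; auto. }
    pose proof (exp_pos (a0 * L)). pose proof (exp_pos rho).
    replace (exp (a0 * L) * (exp rho * / exp (rho * w))) with ((exp (a0 * L) * exp rho) * / exp (rho * w)) by ring.
    replace (exp rho * / (rho / INR N) ^ N * (exp (a0 * L) * / w ^ N)) with ((exp (a0 * L) * exp rho) * (/ (rho / INR N) ^ N * / w ^ N)) by ring.
    apply Rmult_le_compat_l; auto. left. apply Rmult_lt_0_compat; auto.
  - exists 1, a0. split. lra. split. auto. intros x Hx. pose proof (LL_ge0 x Hx) as HL.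
    rewrite Rmult_1_l, Rmult_comm. rewrite <- (Rmult_1_l (exp (a0 * LL x))) at 2.
    apply Rmult_le_compat_r. left; apply exp_pos.
    unfold gg. rewrite <- exp_0. apply exp_le.
    assert (exp (/ rho * LL x) <= 1). { rewrite <- exp_0. apply exp_le. assert (/ rho < 0) by (apply Rinv_lt_0_compat; auto). nra. }
    rewrite exp_0. nra.
Qed.

Lemma lim_expL d : d < 0 -> forall eps, 0 < eps -> exists M, forall x, x < M -> exp (d * LL x) < eps.
Proof.
  intros Hd eps He. exists (Rmin 0 (1 - exp (ln eps / d))). intros x Hx.
  assert (Hx1 : x < 0) by (pose proof (Rmin_l 0 (1 - exp (ln eps / d))); lra).
  assert (Hx2 : exp (ln eps / d) < 1 - x) by (pose proof (Rmin_r 0 (1 - exp (ln eps / d))); lra).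
  assert (H1 : ln eps / d < LL x). { unfold LL. rewrite <- (ln_exp (ln eps / d)). apply ln_increasing; auto. apply exp_pos. }
  rewrite <- (exp_ln eps) by auto. apply exp_increasing.
  assert (ln eps = d * (ln eps / d)) by (field; lra). nra.
Qed.

Lemma gen_of_lim {V : NormedModule R_AbsRing} (f : R -> V) (F : R -> V) (l : V) :
  (forall a, a < 0 -> is_RInt f a 0 (F a)) ->
  filterlim F (Rbar_locally m_infty) (locally l) ->
  is_RInt_gen f (Rbar_locally m_infty) (at_point 0) l.
Proof.
  intros HI Hl P HP. specialize (Hl P HP).
  apply Filter_prod with (fun a => a < 0 /\ P (F a)) (fun b => b = 0).
  - apply filter_and; auto. exists 0. intros; auto.
  - reflexivity.
  - intros a b [Ha HPa] Hb. simpl. subst b. exists (F a). split; auto.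
Qed.

Lemma aux_abs (a b : R) : Rabs (b - (a + b)) = Rabs a.
Proof. replace (b - (a + b)) with (- a) by ring. apply Rabs_Ropp. Qed.

Lemma cauchy_lim (f k K : R -> R) :
  (forall x, x <= 0 -> continuous f x) -> (forall x, x <= 0 -> continuous k x) ->
  (forall x, x <= 0 -> Rabs (f x) <= k x) -> (forall x, x <= 0 -> is_derive K x (k x)) ->
  (forall eps, 0 < eps -> exists M, forall x, x < M -> Rabs (K x) < eps) ->
  exists l, filterlim (fun a => RInt f a 0) (Rbar_locally m_infty) (locally l).
Proof.
  intros Hf Hk Hb HK HKl.
  assert (Hex : forall u v, u <= 0 -> v <= 0 -> ex_RInt f u v).
  { intros u v Hu Hv. apply (ex_RInt_continuous (V := R_CompleteNormedModule)). intros z Hz. apply Hf.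
    pose proof (Rmax_lub u v 0 Hu Hv). lra. }
  assert (Hmain : forall u v, u <= v -> v <= 0 -> Rabs (RInt f u v) <= K v - K u).
  { intros u v Huv Hv.
    assert (HIk : is_RInt k u v (K v - K u)).
    { apply (is_RInt_derive K k). intros x Hx. apply HK. rewrite Rmax_right in Hx by auto. lra.
      intros x Hx. apply Hk. rewrite Rmax_right in Hx by auto. lra. }
    eapply Rle_trans. apply abs_RInt_le; auto. apply Hex; lra.
    rewrite <- (is_RInt_unique _ _ _ _ HIk). apply RInt_le; auto.
    apply (ex_RInt_continuous (V := R_CompleteNormedModule)). intros z Hz. apply continuous_comp. apply Hf. rewrite Rmax_right in Hz by auto. lra.
    apply continuous_Rabs.
    eexists; eauto.
    intros x Hx. apply Hb. lra. }
  apply (filterlim_locally_cauchy (F := Rbar_locally m_infty)).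
  intros eps. destruct (HKl (eps / 2)) as [M HM]. pose proof (cond_pos eps); lra.
  exists (fun a => a < Rmin M 0). split. exists (Rmin M 0). auto.
  intros u v Hu Hv. pose proof (Rmin_l M 0). pose proof (Rmin_r M 0).
  change (Rabs (RInt f v 0 - RInt f u 0) < eps).
  assert (HC := RInt_Chasles f u v 0 (Hex u v ltac:(lra) ltac:(lra)) (Hex v 0 ltac:(lra) ltac:(lra))).
  change (RInt f u v + RInt f v 0 = RInt f u 0) in HC.
  rewrite <- HC. rewrite aux_abs.
  pose proof (HM u ltac:(lra)) as HMu. pose proof (HM v ltac:(lra)) as HMv.
  apply Rabs_def2 in HMu. apply Rabs_def2 in HMv.
  destruct (Rle_dec u v).
  - pose proof (Hmain u v r ltac:(lra)). lra.
  - assert (HS := opp_RInt_swap f v u (Hex v u ltac:(lra) ltac:(lra))). change (- RInt f v u = RInt f u v) in HS.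
    rewrite <- HS, Rabs_Ropp. pose proof (Hmain v u ltac:(lra) ltac:(lra)). lra.
Qed.

Local Open Scope R_scope.

Lemma integrand_eq rho al be x :
  Phi_inf_integrand rho (al, be) x = (cp rho al be x, sp rho al be x).
Proof.
  unfold Phi_inf_integrand, Cexp, cp, sp, gg, LL, Rpower. simpl.
  replace (al * ln (1 - x) - be * 0) with (al * ln (1 - x)) by ring.
  replace (al * 0 + be * ln (1 - x)) with (be * ln (1 - x)) by ring.
  unfold Cmult, RtoC. simpl. f_equal; ring.
Qed.

Lemma lim_pair (F1 F2 : R -> R) (l1 l2 : R) :
  filterlim F1 (Rbar_locally m_infty) (locally l1) ->
  filterlim F2 (Rbar_locally m_infty) (locally l2) ->
  filterlim (fun a => (F1 a, F2 a) : C) (Rbar_locally m_infty) (@locally C_R_NormedModule (l1, l2)).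
Proof.
  intros H1 H2. apply filterlim_locally. intros eps.
  apply filterlim_locally with (eps := eps) in H1. apply filterlim_locally with (eps := eps) in H2.
  generalize (filter_and _ _ H1 H2). apply filter_imp. intros x [Hx1 Hx2]. split; auto.
Qed.

Lemma is_RInt_C (f : R -> C) (fr fi : R -> R) a b lr li :
  (forall x, f x = (fr x, fi x)) -> is_RInt fr a b lr -> is_RInt fi a b li ->
  @is_RInt C_R_NormedModule f a b (lr, li).
Proof.
  intros Hf H1 H2.
  apply (@is_RInt_ext C_R_NormedModule (fun x => (fr x, fi x))). intros; rewrite Hf; auto.
  apply (@is_RInt_fct_extend_pair R_NormedModule R_NormedModule (fun x => (fr x, fi x)) a b lr li); auto.
Qed.

Lemma RInt_cont_correct (f : R -> R) a : a <= 0 -> (forall x, x < 1 -> continuous f x) -> is_RInt f a 0 (RInt f a 0).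
Proof. intros Ha Hf. apply (RInt_correct (V := R_CompleteNormedModule)).
  apply (ex_RInt_continuous (V := R_CompleteNormedModule)). intros z Hz. apply Hf.
  rewrite Rmax_right in Hz by auto. lra. Qed.

Lemma abs_bound_aux A t g : 0 <= A -> 0 <= g -> Rabs t <= 1 -> Rabs (A * t * g) <= A * g.
Proof. intros HA Hg Ht. rewrite !Rabs_mult, (Rabs_pos_eq A), (Rabs_pos_eq g) by auto.
  replace (A * g) with (A * 1 * g) by ring. apply Rmult_le_compat_r; auto. apply Rmult_le_compat_l; auto. Qed.

Lemma lim_conv (f : R -> R) (l : R) : is_lim f m_infty l -> filterlim f (Rbar_locally m_infty) (locally l).
Proof. intros H; exact H. Qed.

Lemma sum_ext (f g : R -> R) a b l1 l2 : is_RInt (fun x => f x - g x) a b l1 -> is_RInt g a b l2 ->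
  is_RInt f a b (l1 + l2).
Proof. intros H1 H2. apply (is_RInt_ext (fun x => plus (f x - g x) (g x))).
  intros x _. change (f x - g x + g x = f x). ring. apply (is_RInt_plus _ _ _ _ _ _ H1 H2). Qed.

Lemma part2 (rho : R) (hr : rho <> 0) (s : C) :
  (0 < rho)%R \/ ((rho < 0)%R /\ (Re s < 0)%R) ->
  exists l1 l2 : C,
    Phi_inf_is rho (s + RtoC (/ rho) - 1)%C l1 /\
    Phi_inf_is rho (s - 1)%C l2 /\
    l1 = (1 + s * l2)%C.
Proof.
  intros Hcase. destruct s as [a0 b0]. simpl Re in Hcase.
  destruct (base_bound rho a0 hr Hcase) as [Cb [d [HC [Hd Hb]]]].
  set (k := fun x => Cb * exp ((d - 1) * LL x)).
  set (K := fun x => - (Cb / d) * exp (d * LL x)).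
  set (cr := cp rho (a0 - 1) b0). set (ci := sp rho (a0 - 1) b0).
  assert (Hkb : forall x, x <= 0 -> Rabs (cr x) <= k x /\ Rabs (ci x) <= k x).
  { intros x Hx. unfold cr, ci, cp, sp, k. rewrite !exp_m1 by lra.
    assert (Hu : 0 < 1 - x) by lra. pose proof (Hb x Hx). pose proof (gg_pos rho x). pose proof (exp_pos (a0 * LL x)).
    assert (exp (a0 * LL x) / (1 - x) * gg rho x <= Cb * (exp (d * LL x) / (1 - x))).
    { unfold Rdiv. replace (exp (a0 * LL x) * / (1 - x) * gg rho x) with ((exp (a0 * LL x) * gg rho x) * / (1 - x)) by ring.
      replace (Cb * (exp (d * LL x) * / (1 - x))) with ((Cb * exp (d * LL x)) * / (1 - x)) by ring.
      apply Rmult_le_compat_r; auto. left; apply Rinv_0_lt_compat; auto. }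
    split; (eapply Rle_trans; [apply abs_bound_aux|]); try lra.
    apply Rlt_le, Rdiv_lt_0_compat; auto. apply Rabs_le, COS_bound.
    apply Rlt_le, Rdiv_lt_0_compat; auto. apply Rabs_le, SIN_bound. }
  assert (Hkc : forall x, x <= 0 -> continuous k x).
  { intros x Hx. apply (ex_derive_continuous k). unfold k, LL. auto_derive. lra. }
  assert (HKd : forall x, x <= 0 -> is_derive K x (k x)).
  { intros x Hx. unfold K, k, LL. auto_derive. lra. replace (1 + - x) with (1 - x) by ring. pose proof (exp_m1 d x ltac:(lra)) as Em. unfold LL in Em. rewrite Em.
    set (E := exp (d * ln (1 - x))). field. lra. }
  assert (HKl : forall eps, 0 < eps -> exists M, forall x, x < M -> Rabs (K x) < eps).
  { intros eps He. destruct (lim_expL d Hd (eps * (- d) / Cb)) as [M HM].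
    apply Rdiv_lt_0_compat; auto. nra.
    exists M. intros x Hx. specialize (HM x Hx). unfold K.
    rewrite Rabs_mult, Rabs_Ropp, (Rabs_pos_eq (exp _)) by (left; apply exp_pos).
    rewrite Rabs_div, (Rabs_pos_eq Cb), (Rabs_left d) by lra.
    apply (Rmult_lt_compat_l (Cb / - d)) in HM. replace (Cb / - d * (eps * - d / Cb)) with eps in HM by (field; lra).
    lra. apply Rdiv_lt_0_compat; lra. }
  destruct (cauchy_lim cr k K) as [l2r Hl2r]; auto.
  { intros; apply cp_cont; lra. } { intros; apply Hkb; auto. }
  destruct (cauchy_lim ci k K) as [l2i Hl2i]; auto.
  { intros; apply sp_cont; lra. } { intros; apply Hkb; auto. }
  set (l2 := (l2r, l2i) : C).
  exists (1 + (a0, b0) * l2)%C, l2.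
  assert (Hs1 : ((a0, b0) - 1)%C = (a0 - 1, b0)).
  { unfold Cminus, Cplus, Copp, RtoC. simpl. f_equal; ring. }
  assert (Hs2 : ((a0, b0) + RtoC (/ rho) - 1)%C = (a0 + / rho - 1, b0)).
  { unfold Cminus, Cplus, Copp, RtoC. simpl. f_equal; ring. }
  rewrite Hs1, Hs2.
  split; [|split; [|reflexivity]].
  -
    set (Gr := fun x => exp (a0 * LL x) * cos (b0 * LL x) * gg rho x).
    set (Gi := fun x => exp (a0 * LL x) * sin (b0 * LL x) * gg rho x).
    assert (HG0 : Gr 0 = 1 /\ Gi 0 = 0).
    { unfold Gr, Gi, gg, LL. replace (1 - 0) with 1 by ring. rewrite ln_1, !Rmult_0_r, exp_0, cos_0, sin_0.
      replace (- rho * (1 - 1)) with 0 by ring. rewrite exp_0. split; ring. }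
    assert (HGl : forall G, (forall x, x <= 0 -> Rabs (G x) <= Cb * exp (d * LL x)) ->
                  filterlim G (Rbar_locally m_infty) (locally 0)).
    { intros G HGb. apply filterlim_locally. intros eps.
      destruct (lim_expL d Hd (eps / Cb)) as [M HM]. apply Rdiv_lt_0_compat; auto. apply cond_pos.
      exists (Rmin M 0). intros x Hx. pose proof (Rmin_l M 0). pose proof (Rmin_r M 0).
      change (Rabs (G x - 0) < eps). rewrite Rminus_0_r.
      eapply Rle_lt_trans. apply HGb; lra. specialize (HM x ltac:(lra)).
      apply (Rmult_lt_compat_l Cb) in HM; auto. replace (Cb * (eps / Cb)) with (pos eps) in HM by (field; lra). lra. }
    assert (HGbr : forall x, x <= 0 -> Rabs (Gr x) <= Cb * exp (d * LL x)).
    { intros x Hx. eapply Rle_trans. apply abs_bound_aux. left; apply exp_pos. left; apply gg_pos.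
      apply Rabs_le, COS_bound. apply Hb; auto. }
    assert (HGbi : forall x, x <= 0 -> Rabs (Gi x) <= Cb * exp (d * LL x)).
    { intros x Hx. eapply Rle_trans. apply abs_bound_aux. left; apply exp_pos. left; apply gg_pos.
      apply Rabs_le, SIN_bound. apply Hb; auto. }
    set (Fr := fun a => RInt cr a 0). set (Fi := fun a => RInt ci a 0).
    apply (gen_of_lim (V := C_R_NormedModule) _
      (fun a => ((1 - Gr a) + (a0 * Fr a - b0 * Fi a), (0 - Gi a) + (a0 * Fi a + b0 * Fr a)) : C)).
    + intros a Ha.
      assert (HIr : is_RInt cr a 0 (Fr a)) by (apply RInt_cont_correct; [lra | intros; apply cp_cont; auto]).
      assert (HIi : is_RInt ci a 0 (Fi a)) by (apply RInt_cont_correct; [lra | intros; apply sp_cont; auto]).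
      apply is_RInt_C with (fr := cp rho (a0 + / rho - 1) b0) (fi := sp rho (a0 + / rho - 1) b0).
      { intros; apply integrand_eq. }
      * assert (H1 : is_RInt (fun x => cp rho (a0 + / rho - 1) b0 x - (a0 * cr x - b0 * ci x)) a 0 (Gr 0 - Gr a)).
        { apply (is_RInt_derive Gr). intros x Hx. apply Gr_derive; auto. rewrite Rmax_right in Hx; lra.
          intros x Hx. apply (ex_derive_continuous (fun x => cp rho (a0 + / rho - 1) b0 x - (a0 * cr x - b0 * ci x))).
          unfold cr, ci, cp, sp, gg, LL. auto_derive. rewrite Rmax_right in Hx; lra. }
        assert (H2 : is_RInt (fun x => a0 * cr x - b0 * ci x) a 0 (a0 * Fr a - b0 * Fi a)).
        { apply (is_RInt_minus (V := R_NormedModule)); apply (is_RInt_scal (V := R_NormedModule)); auto. }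
        assert (H3 := sum_ext _ _ _ _ _ _ H1 H2).
        destruct HG0 as [HG0r _]. rewrite HG0r in H3. exact H3.
      * assert (H1 : is_RInt (fun x => sp rho (a0 + / rho - 1) b0 x - (a0 * ci x + b0 * cr x)) a 0 (Gi 0 - Gi a)).
        { apply (is_RInt_derive Gi). intros x Hx. apply Gi_derive; auto. rewrite Rmax_right in Hx; lra.
          intros x Hx. apply (ex_derive_continuous (fun x => sp rho (a0 + / rho - 1) b0 x - (a0 * ci x + b0 * cr x))).
          unfold cr, ci, cp, sp, gg, LL. auto_derive. rewrite Rmax_right in Hx; lra. }
        assert (H2 : is_RInt (fun x => a0 * ci x + b0 * cr x) a 0 (a0 * Fi a + b0 * Fr a)).
        { apply (is_RInt_plus (V := R_NormedModule)); apply (is_RInt_scal (V := R_NormedModule)); auto. }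
        assert (H3 := sum_ext _ _ _ _ _ _ H1 H2).
        destruct HG0 as [_ HG0i]. rewrite HG0i in H3. exact H3.
    + replace (1 + (a0, b0) * l2)%C with (((1 - 0) + (a0 * l2r - b0 * l2i), (0 - 0) + (a0 * l2i + b0 * l2r)) : C).
      2:{ unfold l2, Cplus, Cmult, RtoC. simpl. f_equal; ring. }
      apply lim_pair.
      * apply lim_conv. apply is_lim_plus'. apply is_lim_minus'. apply is_lim_const. apply HGl; auto.
        apply is_lim_minus'. apply (is_lim_scal_l Fr a0 m_infty l2r); auto. apply (is_lim_scal_l Fi b0 m_infty l2i); auto.
      * apply lim_conv. apply is_lim_plus'. apply is_lim_minus'. apply is_lim_const. apply HGl; auto.
        apply is_lim_plus'. apply (is_lim_scal_l Fi a0 m_infty l2i); auto. apply (is_lim_scal_l Fr b0 m_infty l2r); auto.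
  - apply (gen_of_lim (V := C_R_NormedModule) _ (fun a => (RInt cr a 0, RInt ci a 0) : C)).
    + intros a Ha. apply is_RInt_C with (fr := cr) (fi := ci).
      { intros; apply integrand_eq. }
      apply RInt_cont_correct; [lra | intros; apply cp_cont; auto].
      apply RInt_cont_correct; [lra | intros; apply sp_cont; auto].
    + apply lim_pair; auto.
Qed.

Theorem lemma9p3 (r : Q) (hr : ~ (r == 0)%Q) :
  (* (i) p-adic part *)
  (forall (p : Z), prime p ->
     ~ (p | Qnum (Qred r))%Z -> ~ (p | Zpos (Qden (Qred r)))%Z ->
     forall rinv : padic, isZp p rinv -> zp_of_rat p rinv (/ r)%Q ->
     forall phi : padic -> padic,
       zp_continuous p phi ->
       (forall n : nat, zp_of_rat p (phi (zp_const (Z.of_nat n))) (phi_coef r n)) ->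
     forall s : padic, isZp p s ->
       exists L1 L2 : padic,
         S_op_to p phi (zp_sub (zp_add s rinv) (zp_const 1%Z)) (zp_const (-1)%Z) L1 /\
         S_op_to p phi (zp_sub s (zp_const 1%Z)) (zp_const (-1)%Z) L2 /\
         zp_eq p L1 (zp_add (zp_const 1%Z) (zp_mul s L2)))
  /\
  (* (ii) archimedean part *)
  (forall s : C,
     (0 < Q2R r)%R \/ ((Q2R r < 0)%R /\ (Re s < 0)%R) ->
     exists l1 l2 : C,
       Phi_inf_is (Q2R r) (s + RtoC (/ Q2R r) - 1)%C l1 /\
       Phi_inf_is (Q2R r) (s - 1)%C l2 /\
       l1 = (1 + s * l2)%C).
Proof.
  split.
  - apply part1; auto.
  - intros s Hs. apply part2; auto.
    intros H. apply hr. apply eqR_Qeq. rewrite H. rewrite RMicromega.Q2R_0. reflexivity.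
Qed.
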